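(* For $z\in\{z\in\mathbb{C}:|\arg(z)|<\pi\}$, \[ {}_2F_2\left(\begin{matrix}1,&1\\3,&z+2\end{matrix};z\right)=\frac{2(z+1)}{z^2}\left(1+z-\frac{\gamma(z,z)}{z^{z-1}e^{-z}}\right). \] In particular, for every positive integer $n$, \[ {}_2F_2\left(\begin{matrix}1,&1\\3,&n+2\end{matrix};n\right)=\frac{2(n+1)}{n^2}\left(1+n-\frac{(n-1)!}{n^{n-1}}\left(e^n-\sum_{k=0}^{n-1}\frac{n^k}{k!}\right)\right). \]
   Context: ${}_pF_q$ denotes the generalized hypergeometric series $\sum_{k\ge0}\frac{(a_1)_k\cdots(a_p)_k}{(b_1)_k\cdots(b_q)_k}\frac{x^k}{k!}$, with $(a)_k$ the Pochhammer symbol. $\gamma(s,x)=\int_0^x t^{s-1}e^{-t}\,dt$ is the lower incomplete gamma function; $z^{z-1}$ uses the principal branch. *)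

(* Defs.v *)
From Stdlib Require Import Reals.
From Coquelicot Require Import Coquelicot.
Open Scope R_scope.

Definition Cexp (z : C) : C :=
  (exp (Re z) * cos (Im z), exp (Re z) * sin (Im z)).

(* |arg z| < pi  <->  z lies off the closed half-line (-oo, 0] *)
Definition in_slit_plane (z : C) : Prop := ~ (Im z = 0 /\ Re z <= 0).

(* principal argument, valid (values in (-pi,pi)) on the slit plane:
   arg z = 2 atan (Im z / (|z| + Re z)) since tan(theta/2) = sin/(1+cos). *)
Definition Carg (z : C) : R := 2 * atan (Im z / (Cmod z + Re z)).

Definition CLog (z : C) : C := (ln (Cmod z), Carg z).
Definition Cpowc (a b : C) : C := Cexp (b * CLog a)%C.

Fixpoint Cpown (x : C) (k : nat) : C :=
  match k with O => 1%C | S k' => (x * Cpown x k')%C end.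

Fixpoint poch (a : C) (k : nat) : C :=
  match k with O => 1%C | S k' => (poch a k' * (a + RtoC (INR k')))%C end.

Definition F22_term (a1 a2 b1 b2 x : C) (k : nat) : C :=
  (poch a1 k * poch a2 k / (poch b1 k * poch b2 k)
     * Cpown x k / RtoC (INR (Factorial.fact k)))%C.

(* Lower incomplete gamma, series form (DLMF 8.7.1):
   gamma(s,x) = x^s * sum_k (-x)^k / (k! (s+k)).
   For Re s > 0 this equals int_0^x t^(s-1) e^(-t) dt; it is the
   analytic continuation of that integral in s. *)
Definition lgamma_series_term (s x : C) (k : nat) : C :=
  (Cpown (- x) k / (RtoC (INR (Factorial.fact k)) * (s + RtoC (INR k))))%C.

Definition is_lower_gamma (s x g : C) : Prop :=
  exists S : C, is_series (lgamma_series_term s x) S /\ g = (Cpowc x s * S)%C.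

Fixpoint rpoch (a : R) (k : nat) : R :=
  match k with O => 1 | S k' => rpoch a k' * (a + INR k') end.
Definition F22_term_R (a1 a2 b1 b2 x : R) (k : nat) : R :=
  rpoch a1 k * rpoch a2 k / (rpoch b1 k * rpoch b2 k) * x ^ k / INR (Factorial.fact k).

(* Main.v *)
Require Import Defs.
From Stdlib Require Import Reals Lra Lia.
From Coquelicot Require Import Coquelicot.
Open Scope R_scope.

Lemma lim_C (f : nat -> C) (l : C) :
  filterlim (fun n => Re (f n)) eventually (locally (Re l)) ->
  filterlim (fun n => Im (f n)) eventually (locally (Im l)) ->
  filterlim f eventually (locally l).
Proof.
intros H1 H2. apply filterlim_locally. intros eps.
pose proof (proj1 (filterlim_locally _ _) H1 eps) as E1.
pose proof (proj1 (filterlim_locally _ _) H2 eps) as E2.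
generalize (filter_and _ _ E1 E2). apply filter_imp.
intros n [B1 B2]. split; assumption.
Qed.

Lemma lim_Re (f : nat -> C) (l : C) :
  filterlim f eventually (locally l) ->
  filterlim (fun n => Re (f n)) eventually (locally (Re l)).
Proof.
intros H. apply filterlim_locally. intros eps.
pose proof (proj1 (filterlim_locally _ _) H eps) as E1.
revert E1. apply filter_imp. intros n [B1 B2]. exact B1.
Qed.

Lemma lim_Im (f : nat -> C) (l : C) :
  filterlim f eventually (locally l) ->
  filterlim (fun n => Im (f n)) eventually (locally (Im l)).
Proof.
intros H. apply filterlim_locally. intros eps.
pose proof (proj1 (filterlim_locally _ _) H eps) as E1.
revert E1. apply filter_imp. intros n [B1 B2]. exact B2.
Qed.

Lemma sum_n_Re (a : nat -> C) n : Re (sum_n a n) = sum_n (fun k => Re (a k)) n.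
Proof.
induction n. rewrite !sum_O; reflexivity.
rewrite !sum_Sn. simpl. rewrite <- IHn. reflexivity.
Qed.
Lemma sum_n_Im (a : nat -> C) n : Im (sum_n a n) = sum_n (fun k => Im (a k)) n.
Proof.
induction n. rewrite !sum_O; reflexivity.
rewrite !sum_Sn. simpl. rewrite <- IHn. reflexivity.
Qed.

Lemma is_series_C (a : nat -> C) (l : C) :
  is_series (fun n => Re (a n)) (Re l) -> is_series (fun n => Im (a n)) (Im l) ->
  is_series a l.
Proof.
intros H1 H2. unfold is_series in *. apply lim_C.
- eapply filterlim_ext; [|exact H1]. intros n; symmetry; apply sum_n_Re.
- eapply filterlim_ext; [|exact H2]. intros n; symmetry; apply sum_n_Im.
Qed.

Lemma is_series_Re (a : nat -> C) (l : C) :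
  is_series a l -> is_series (fun n => Re (a n)) (Re l).
Proof.
intros H. unfold is_series in *. apply lim_Re in H.
eapply filterlim_ext; [|exact H]. intros n; apply sum_n_Re.
Qed.
Lemma is_series_Im (a : nat -> C) (l : C) :
  is_series a l -> is_series (fun n => Im (a n)) (Im l).
Proof.
intros H. unfold is_series in *. apply lim_Im in H.
eapply filterlim_ext; [|exact H]. intros n; apply sum_n_Im.
Qed.


Fixpoint csum (f : nat -> C) (n : nat) : C :=
  match n with O => f O | S m => (csum f m + f (S m))%C end.

Lemma csum_sum_n (f : nat -> C) n : sum_n f n = csum f n.
Proof.
induction n. now rewrite sum_O. rewrite sum_Sn, IHn. reflexivity.
Qed.

Lemma csum_ext_le f g n : (forall k, (k <= n)%nat -> f k = g k) -> csum f n = csum g n.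
Proof.
induction n; intros H; simpl. apply H; lia.
rewrite IHn by (intros; apply H; lia). rewrite H by lia. reflexivity.
Qed.

Lemma csum_plus f g n : csum (fun k => f k + g k)%C n = (csum f n + csum g n)%C.
Proof. induction n; simpl. reflexivity. rewrite IHn. ring. Qed.

Lemma csum_scal c f n : csum (fun k => c * f k)%C n = (c * csum f n)%C.
Proof. induction n; simpl. reflexivity. rewrite IHn. ring. Qed.

Lemma RtoC_neq0 x : x <> 0 -> RtoC x <> 0%C.
Proof. intros H E. apply H. apply (f_equal Re) in E. exact E. Qed.

Lemma fact_neq0 k : RtoC (INR (Factorial.fact k)) <> 0%C.
Proof. apply RtoC_neq0, INR_fact_neq_0. Qed.

Lemma pascal_sum (g : nat -> C) n :
  csum (fun k => RtoC (Binomial.C (S n) k) * g k)%C (S n) =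
  (csum (fun k => RtoC (Binomial.C n k) * g k) n +
   csum (fun k => RtoC (Binomial.C n k) * g (S k)) n)%C.
Proof.
assert (P : forall m, (m <= n)%nat ->
  csum (fun k => RtoC (Binomial.C (S n) k) * g k)%C m =
  (csum (fun k => RtoC (Binomial.C n k) * g k) m +
   match m with O => 0 | S m' => csum (fun k => RtoC (Binomial.C n k) * g (S k)) m' end)%C).
{ induction m; intros Hm.
  - simpl. rewrite !C_n_0. ring.
  - simpl csum at 1. rewrite IHm by lia.
    rewrite <- (pascal n m) by lia. rewrite RtoC_plus.
    destruct m; simpl; ring. }
simpl csum at 1. rewrite P by lia. rewrite C_n_n.
destruct n; simpl. rewrite C_n_n. ring.
rewrite C_n_n. ring.
Qed.

Lemma Cpown_add a m n : Cpown a (m + n) = (Cpown a m * Cpown a n)%C.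
Proof. induction m; simpl. ring. rewrite IHm. ring. Qed.

Lemma Cpown_mul a b n : Cpown (a * b) n = (Cpown a n * Cpown b n)%C.
Proof. induction n; simpl. ring. rewrite IHn. ring. Qed.

Lemma binom_C a b n :
  csum (fun k => RtoC (Binomial.C n k) * (Cpown a k * Cpown b (n - k)))%C n = Cpown (a + b) n.
Proof.
induction n.
- simpl. rewrite C_n_0. ring.
- rewrite pascal_sum. change (Cpown (a + b) (S n)) with ((a + b) * Cpown (a + b) n)%C. rewrite <- IHn.
  rewrite Cmult_plus_distr_r, Cplus_comm. f_equal.
  + rewrite <- csum_scal. apply csum_ext_le. intros k Hk. simpl. ring.
  + rewrite <- csum_scal. apply csum_ext_le. intros k Hk.
    replace (S n - k)%nat with (S (n - k)) by lia. simpl. ring.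
Qed.

Lemma exp_cauchy a b n :
  csum (fun k => Cpown a k / RtoC (INR (Factorial.fact k)) *
                 (Cpown b (n - k) / RtoC (INR (Factorial.fact (n - k)))))%C n =
  (Cpown (a + b) n / RtoC (INR (Factorial.fact n)))%C.
Proof.
rewrite <- binom_C. unfold Cdiv. rewrite Cmult_comm, <- csum_scal.
apply csum_ext_le. intros k Hk. unfold Binomial.C.
rewrite RtoC_div by (apply Rmult_integral_contrapositive; split; apply INR_fact_neq_0).
rewrite RtoC_mult.
field. repeat split; apply fact_neq0.
Qed.


Lemma poch_S_l w m : poch w (S m) = (w * poch (w + 1) m)%C.
Proof.
induction m. simpl. ring.
change (poch w (S (S m))) with (poch w (S m) * (w + RtoC (INR (S m))))%C.
rewrite IHm. simpl poch. rewrite S_INR, RtoC_plus. ring.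
Qed.

Lemma poch_nz w m : (forall k, (w + RtoC (INR k))%C <> 0%C) -> poch w m <> 0%C.
Proof.
intros H. induction m; simpl. apply C1_nz. apply Cmult_neq_0; auto.
Qed.

Lemma nz0 z : (z + RtoC (INR 0))%C <> 0%C -> z <> 0%C.
Proof. intros H E. apply H. rewrite E. simpl. ring. Qed.

Lemma pf_id n : forall z, (forall k, (z + RtoC (INR k))%C <> 0%C) ->
  csum (fun k => RtoC (Binomial.C n k) * (Cpown (-1) k / (z + RtoC (INR k))))%C n
  = (RtoC (INR (Factorial.fact n)) / poch z (S n))%C.
Proof.
induction n; intros z H.
- simpl. rewrite C_n_0. simpl. pose proof (nz0 z (H O)).
  field. auto.
- rewrite pascal_sum. rewrite IHn by exact H.
  assert (H1 : forall k, ((z + 1) + RtoC (INR k))%C <> 0%C).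
  { intros k. specialize (H (S k)). rewrite S_INR, RtoC_plus in H.
    replace (z + 1 + RtoC (INR k))%C with (z + (RtoC (INR k) + 1))%C by ring. exact H. }
  assert (E : csum (fun k => RtoC (Binomial.C n k) * (Cpown (-1) (S k) / (z + RtoC (INR (S k)))))%C n
     = ((-1) * csum (fun k => RtoC (Binomial.C n k) * (Cpown (-1) k / ((z + 1) + RtoC (INR k)))) n)%C).
  { rewrite <- csum_scal. apply csum_ext_le. intros k _. simpl Cpown.
    rewrite S_INR, RtoC_plus.
    replace (z + (RtoC (INR k) + 1))%C with ((z + 1) + RtoC (INR k))%C by ring.
    unfold Cdiv. ring. }
  rewrite E, (IHn (z + 1)%C H1).
  rewrite (poch_S_l z (S n)), (poch_S_l z n).
  change (poch (z + 1) (S n)) with (poch (z + 1) n * ((z + 1) + RtoC (INR n)))%C.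
  assert (Hz : z <> 0%C) by exact (nz0 z (H O)).
  assert (HP : poch (z + 1) n <> 0%C) by (apply poch_nz; exact H1).
  pose proof (H1 n) as Hn.
  rewrite fact_simpl, mult_INR, S_INR, RtoC_mult, RtoC_plus.
  field. repeat split; auto.
Qed.

Lemma cauchy_coef z n : (forall k, (z + RtoC (INR k))%C <> 0%C) ->
  csum (fun k => lgamma_series_term z z k *
                 (Cpown z (n - k) / RtoC (INR (Factorial.fact (n - k)))))%C n
  = (Cpown z n / poch z (S n))%C.
Proof.
intros H.
assert (HP : poch z (S n) <> 0%C) by (apply poch_nz; exact H).
transitivity ((Cpown z n / RtoC (INR (Factorial.fact n))) *
  csum (fun k => RtoC (Binomial.C n k) * (Cpown (-1) k / (z + RtoC (INR k)))) n)%C.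
2:{ rewrite pf_id by exact H. field. split; auto. apply fact_neq0. }
rewrite <- csum_scal. apply csum_ext_le. intros k Hk.
unfold lgamma_series_term.
replace (- z)%C with ((-1) * z)%C by ring. rewrite Cpown_mul.
replace n with (k + (n - k))%nat at 3 by lia. rewrite Cpown_add.
unfold Binomial.C.
rewrite RtoC_div by (apply Rmult_integral_contrapositive; split; apply INR_fact_neq_0).
rewrite RtoC_mult.
pose proof (H k).
field. repeat split; auto; apply fact_neq0.
Qed.


Ltac Req := match goal with |- ?a = ?b => change (@eq R a b) end.

Lemma Re_csum f n : Re (csum f n) = sum_f_R0 (fun k => Re (f k)) n.
Proof. induction n; simpl. reflexivity. unfold Re, Im in *. rewrite IHn. reflexivity. Qed.
Lemma Im_csum f n : Im (csum f n) = sum_f_R0 (fun k => Im (f k)) n.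
Proof. induction n; simpl. reflexivity. unfold Re, Im in *. rewrite IHn. reflexivity. Qed.

Lemma im_le_Cmod c : Rabs (Im c) <= Cmod c.
Proof.
unfold Cmod. rewrite <- sqrt_Rsqr_abs. apply sqrt_le_1_alt. unfold Rsqr, Im. nra.
Qed.

Lemma ex_Re (a : nat -> C) : ex_series (fun n => Cmod (a n)) -> ex_series (fun n => Rabs (Re (a n))).
Proof.
intros H. eapply (@ex_series_le R_AbsRing R_CompleteNormedModule); [|exact H].
intros n. change (norm (Rabs (Re (a n)))) with (Rabs (Rabs (Re (a n)))).
rewrite Rabs_Rabsolu. apply re_le_Cmod.
Qed.
Lemma ex_Im (a : nat -> C) : ex_series (fun n => Cmod (a n)) -> ex_series (fun n => Rabs (Im (a n))).
Proof.
intros H. eapply (@ex_series_le R_AbsRing R_CompleteNormedModule); [|exact H].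
intros n. change (norm (Rabs (Im (a n)))) with (Rabs (Rabs (Im (a n)))).
rewrite Rabs_Rabsolu. apply im_le_Cmod.
Qed.

Lemma is_series_mult_C (a b : nat -> C) la lb :
  is_series a la -> is_series b lb ->
  ex_series (fun n => Cmod (a n)) -> ex_series (fun n => Cmod (b n)) ->
  is_series (fun n => csum (fun k => a k * b (n - k)%nat)%C n) (la * lb)%C.
Proof.
intros Ha Hb Ea Eb.
pose proof (is_series_Re _ _ Ha) as Ra. pose proof (is_series_Im _ _ Ha) as Ia.
pose proof (is_series_Re _ _ Hb) as Rb. pose proof (is_series_Im _ _ Hb) as Ib.
pose proof (ex_Re _ Ea) as ERa. pose proof (ex_Im _ Ea) as EIa.
pose proof (ex_Re _ Eb) as ERb. pose proof (ex_Im _ Eb) as EIb.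
apply is_series_C.
- pose proof (is_series_minus _ _ _ _ (is_series_mult _ _ _ _ Ra Rb ERa ERb)
                               (is_series_mult _ _ _ _ Ia Ib EIa EIb)) as M.
  eapply is_series_ext; [|exact M]. intros n. simpl.
  rewrite Re_csum. match goal with |- plus ?x (opp ?y) = _ => change (x - y = sum_f_R0 (fun k => Re (a k * b (n - k)%nat)%C) n) end. rewrite <- minus_sum.
  apply sum_eq. intros; reflexivity.
- pose proof (is_series_plus _ _ _ _ (is_series_mult _ _ _ _ Ra Ib ERa EIb)
                               (is_series_mult _ _ _ _ Ia Rb EIa ERb)) as M.
  eapply is_series_ext; [|exact M]. intros n. simpl.
  rewrite Im_csum. match goal with |- plus ?x ?y = _ => change (x + y = sum_f_R0 (fun k => Im (a k * b (n - k)%nat)%C) n) end. rewrite <- plus_sum.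
  apply sum_eq. intros; reflexivity.
Qed.

Lemma is_series_zero : is_series (fun _ : nat => 0) 0.
Proof.
pose proof (@is_series_scal R_AbsRing R_NormedModule 0 _ _ (is_exp_Reals 0)) as M.
assert (E : scal (V := R_NormedModule) 0 (exp 0) = 0) by (change (0 * exp 0 = 0); ring).
rewrite E in M. eapply is_series_ext; [|exact M].
intros n. change (0 * (scal (pow_n 0 n) (/ INR (Factorial.fact n))) = 0). ring.
Qed.

Lemma is_series_RtoC (f : nat -> R) l : is_series f l -> is_series (fun n => RtoC (f n)) (RtoC l).
Proof.
intros H. apply is_series_C; simpl.
- exact H.
- exact is_series_zero.
Qed.

Lemma Cpown_RtoC x n : Cpown (RtoC x) n = RtoC (x ^ n).
Proof. induction n; simpl. reflexivity. rewrite IHn, RtoC_mult. reflexivity. Qed.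

Lemma Cmod_Cpown w n : Cmod (Cpown w n) = Cmod w ^ n.
Proof. induction n; simpl. apply Cmod_1. rewrite Cmod_mult, IHn. reflexivity. Qed.

Lemma Cdiv_R w r : r <> 0 -> (w / RtoC r)%C = (w * RtoC (/ r))%C.
Proof. intros H. unfold Cdiv. rewrite RtoC_inv by exact H. reflexivity. Qed.

Lemma exp_abs w : ex_series (fun n => Cmod (Cpown w n / RtoC (INR (Factorial.fact n)))%C).
Proof.
exists (exp (Cmod w)). pose proof (is_exp_Reals (Cmod w)) as H. unfold is_pseries in H.
eapply is_series_ext; [|exact H]. intros n. simpl.
rewrite Cmod_div by apply fact_neq0. rewrite Cmod_Cpown, Cmod_R, pow_n_pow.
rewrite Rabs_right by (apply Rle_ge, pos_INR). change (scal _ _) with (Cmod w ^ n * / INR (Factorial.fact n)).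
reflexivity.
Qed.

Lemma eo (a : nat -> R) l1 l2 :
  is_series (fun m => a (2 * m)%nat) l1 -> is_series (fun m => a (2 * m + 1)%nat) l2 ->
  is_series a (l1 + l2).
Proof.
intros H1 H2.
assert (P : is_pseries a 1 (l1 + 1 * l2)).
{ apply is_pseries_odd_even.
  - unfold is_pseries. eapply is_series_ext; [|exact H1]. intros n. rewrite pow_n_pow, !pow1.
    change (a (2*n)%nat = 1 * a (2*n)%nat). ring.
  - unfold is_pseries. eapply is_series_ext; [|exact H2]. intros n. rewrite pow_n_pow, !pow1.
    change (a (2*n+1)%nat = 1 * a (2*n+1)%nat). ring. }
rewrite Rmult_1_l in P. unfold is_pseries in P. eapply is_series_ext; [|exact P].
intros n. cbv beta. rewrite pow_n_pow, pow1. change (1 * a n = a n). ring.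
Qed.

Lemma cos_series y : is_series (fun m => (-1) ^ m * y ^ (2 * m) / INR (Factorial.fact (2 * m))) (cos y).
Proof.
unfold cos. destruct (exist_cos (Rsqr y)) as [l Hl]. unfold cos_in in Hl.
apply is_series_Reals in Hl. eapply is_series_ext; [|exact Hl]. intros n.
Req. unfold cos_n, Rsqr. rewrite pow_mult. simpl (y ^ 2). rewrite Rmult_1_r. field. apply INR_fact_neq_0.
Qed.

Lemma sin_series y : is_series (fun m => (-1) ^ m * y ^ (2 * m + 1) / INR (Factorial.fact (2 * m + 1))) (sin y).
Proof.
unfold sin. destruct (exist_sin (Rsqr y)) as [l Hl]. unfold sin_in in Hl.
apply is_series_Reals in Hl. apply (@is_series_scal R_AbsRing R_NormedModule y) in Hl.
eapply is_series_ext; [|exact Hl]. intros n.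
change (y * (sin_n n * y² ^ n) = (-1) ^ n * y ^ (2 * n + 1) / INR (Factorial.fact (2 * n + 1))).
unfold sin_n, Rsqr. rewrite pow_add, pow_mult. simpl (y ^ 2). simpl (y ^ 1). rewrite !Rmult_1_r. field. apply INR_fact_neq_0.
Qed.

Lemma Cpown_iy y m :
  Cpown (0, y) (2 * m) = RtoC ((-1) ^ m * y ^ (2 * m)) /\
  Cpown (0, y) (2 * m + 1) = ((0, (-1) ^ m * y ^ (2 * m + 1)) : C).
Proof.
induction m.
- simpl. split. apply injective_projections; simpl; ring. apply injective_projections; simpl; ring.
- destruct IHm as [E O].
  replace (2 * S m)%nat with (S (S (2 * m))) by lia.
  replace (S (S (2 * m)) + 1)%nat with (S (S (2 * m + 1))) by lia.
  change (Cpown (0, y) (S (S (2 * m)))) with (((0, y) : C) * (((0, y) : C) * Cpown (0, y) (2 * m)))%C.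
  change (Cpown (0, y) (S (S (2 * m + 1)))) with (((0, y) : C) * (((0, y) : C) * Cpown (0, y) (2 * m + 1)))%C.
  rewrite E, O. change ((-1) ^ S m) with ((-1) * (-1) ^ m).
  change (y ^ S (S (2 * m))) with (y * (y * y ^ (2 * m))).
  change (y ^ S (S (2 * m + 1))) with (y * (y * y ^ (2 * m + 1))).
  split; apply injective_projections; simpl; ring.
Qed.

Lemma iy_series y : is_series (fun n => Cpown (0, y) n / RtoC (INR (Factorial.fact n)))%C ((cos y, sin y) : C).
Proof.
apply is_series_C.
- replace (Re (cos y, sin y)) with (cos y + 0) by (simpl; ring).
  apply eo.
  + eapply is_series_ext; [|exact (cos_series y)]. intros m.
    rewrite Cdiv_R by apply INR_fact_neq_0. rewrite re_scal_r.
    rewrite (proj1 (Cpown_iy y m)). simpl. reflexivity.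
  + eapply is_series_ext; [|exact is_series_zero]. intros m.
    rewrite Cdiv_R by apply INR_fact_neq_0. rewrite re_scal_r.
    rewrite (proj2 (Cpown_iy y m)). simpl. ring.
- replace (Im (cos y, sin y)) with (0 + sin y) by (simpl; ring).
  apply eo.
  + eapply is_series_ext; [|exact is_series_zero]. intros m.
    rewrite Cdiv_R by apply INR_fact_neq_0. rewrite im_scal_r.
    rewrite (proj1 (Cpown_iy y m)). simpl. ring.
  + eapply is_series_ext; [|exact (sin_series y)]. intros m.
    rewrite Cdiv_R by apply INR_fact_neq_0. rewrite im_scal_r.
    rewrite (proj2 (Cpown_iy y m)). simpl. reflexivity.
Qed.

Lemma x_series x : is_series (fun n => Cpown (RtoC x) n / RtoC (INR (Factorial.fact n)))%C (RtoC (exp x)).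
Proof.
pose proof (is_series_RtoC _ _ (is_exp_Reals x)) as H.
eapply is_series_ext; [|exact H]. intros n. simpl.
rewrite Cpown_RtoC, pow_n_pow. change (scal (x ^ n) (/ INR (Factorial.fact n))) with (x ^ n * / INR (Factorial.fact n)).
rewrite RtoC_mult, RtoC_inv by apply INR_fact_neq_0. reflexivity.
Qed.

Lemma Cexp_series z : is_series (fun n => Cpown z n / RtoC (INR (Factorial.fact n)))%C (Cexp z).
Proof.
destruct z as [x y].
pose proof (is_series_mult_C _ _ _ _ (x_series x) (iy_series y) (exp_abs _) (exp_abs _)) as H.
eapply is_series_ext; [|replace (Cexp (x, y)) with (RtoC (exp x) * (cos y, sin y))%C; [exact H|]].
- intros n. etransitivity; [apply exp_cauchy|]. f_equal. f_equal. apply injective_projections; simpl; ring.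
- unfold Cexp. apply injective_projections; simpl; ring.
Qed.


Lemma re_le_Cmod' c : Re c <= Cmod c.
Proof. pose proof (re_le_Cmod c). pose proof (Rle_abs (Re c)). lra. Qed.

Lemma slit_delta z : in_slit_plane z ->
  0 < Rmax (Rabs (Im z)) (Re z) /\
  forall k, Rmax (Rabs (Im z)) (Re z) <= Cmod (z + RtoC (INR k)).
Proof.
intros Hz. split.
- destruct (Req_dec (Im z) 0) as [E|E].
  + assert (0 < Re z). { destruct (Rle_lt_dec (Re z) 0); auto. exfalso; apply Hz; auto. }
    eapply Rlt_le_trans; [|apply Rmax_r]. auto.
  + eapply Rlt_le_trans; [|apply Rmax_l]. apply Rabs_pos_lt; auto.
- intros k. apply Rmax_lub.
  + pose proof (im_le_Cmod (z + RtoC (INR k))). simpl in H. rewrite Rplus_0_r in H. exact H.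
  + pose proof (re_le_Cmod' (z + RtoC (INR k))). change (Re (z + RtoC (INR k))) with (Re z + INR k) in H. pose proof (pos_INR k). lra.
Qed.

Lemma slit_nz z : in_slit_plane z -> forall k, (z + RtoC (INR k))%C <> 0%C.
Proof.
intros Hz k E. destruct (slit_delta z Hz) as [H1 H2]. specialize (H2 k).
rewrite E, Cmod_0 in H2. lra.
Qed.

Lemma lg_abs z : in_slit_plane z -> ex_series (fun n => Cmod (lgamma_series_term z z n)).
Proof.
intros Hz. destruct (slit_delta z Hz) as [Hd Hb].
set (d := Rmax (Rabs (Im z)) (Re z)) in *.
apply (@ex_series_le R_AbsRing R_CompleteNormedModule _
   (fun n => Cmod (Cpown (- z) n / RtoC (INR (Factorial.fact n)))%C * / d)).
2: apply ex_series_scal_r, exp_abs.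
intros n. change (norm (Cmod (lgamma_series_term z z n))) with (Rabs (Cmod (lgamma_series_term z z n))).
rewrite Rabs_right by (apply Rle_ge, Cmod_ge_0).
assert (E : lgamma_series_term z z n = (Cpown (- z) n / RtoC (INR (Factorial.fact n)) / (z + RtoC (INR n)))%C).
{ unfold lgamma_series_term. field. repeat split; first [apply fact_neq0 | apply slit_nz; auto]. }
rewrite E, Cmod_div by (apply slit_nz; auto).
unfold Rdiv. apply Rmult_le_compat_l. apply Cmod_ge_0.
apply Rinv_le_contravar; auto.
Qed.

Lemma lg_series z : in_slit_plane z -> exists S, is_series (lgamma_series_term z z) S.
Proof.
intros Hz. 
assert (H : ex_series (lgamma_series_term z z)).
{ apply (@ex_series_le C_AbsRing C_CompleteNormedModule _ (fun n => Cmod (lgamma_series_term z z n))).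
  intros n. apply Rle_refl. apply lg_abs; auto. }
destruct H as [S HS]. exists S. exact HS.
Qed.

Lemma T_series z Sg : in_slit_plane z -> is_series (lgamma_series_term z z) Sg ->
  is_series (fun n => Cpown z n / poch z (S n))%C (Sg * Cexp z)%C.
Proof.
intros Hz HS.
pose proof (is_series_mult_C _ _ _ _ HS (Cexp_series z) (lg_abs z Hz) (exp_abs z)) as H.
eapply is_series_ext; [|exact H]. intros n. apply cauchy_coef. apply slit_nz; auto.
Qed.

Lemma Cexp_add a b : Cexp (a + b) = (Cexp a * Cexp b)%C.
Proof.
unfold Cexp. apply injective_projections; simpl; rewrite exp_plus, ?cos_plus, ?sin_plus; unfold Re, Im; Req; ring.
Qed.

Lemma Cexp_0 : Cexp 0 = 1%C.
Proof. unfold Cexp. apply injective_projections; simpl; rewrite exp_0, ?cos_0, ?sin_0; ring. Qed.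

Lemma Cexp_opp a : (Cexp (- a) * Cexp a)%C = 1%C.
Proof. rewrite <- Cexp_add.
assert (E : (- a + a)%C = RtoC 0) by (apply injective_projections; simpl; ring).
rewrite E. apply Cexp_0. Qed.

Lemma Cexp_nz a : Cexp a <> 0%C.
Proof. intros E. pose proof (Cexp_opp a) as H. rewrite E, Cmult_0_r in H. apply C1_nz. auto. Qed.

Lemma Cexp_log z : in_slit_plane z -> Cexp (CLog z) = z.
Proof.
intros Hz. destruct (slit_delta z Hz) as [Hd Hb].
assert (Hr : 0 < Cmod z). { specialize (Hb O). simpl in Hb. 
  replace (z + RtoC 0)%C with z in Hb by (apply injective_projections; simpl; ring). lra. }
destruct z as [x y]. unfold Cexp, CLog, Carg. simpl Re. simpl Im.
rewrite exp_ln by exact Hr.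
set (r := Cmod (x, y)) in *.
assert (Hr2 : r * r = x * x + y * y).
{ unfold r, Cmod. simpl. rewrite sqrt_sqrt by nra. ring. }
assert (Hrx : 0 < r + x).
{ unfold in_slit_plane in Hz. simpl in Hz.
  destruct (Req_dec y 0) as [E|E].
  - subst y. assert (0 < x) by (destruct (Rle_lt_dec x 0); auto; exfalso; apply Hz; auto). lra.
  - assert (0 < y * y) by (apply Rsqr_pos_lt; exact E). nra. }
set (t := y / (r + x)).
set (s := sqrt (1 + t²)).
assert (Hs : s * s = 1 + t²) by (apply sqrt_sqrt; pose proof (Rle_0_sqr t); lra).
assert (Hs0 : s <> 0) by (intros E; rewrite E in Hs; pose proof (Rle_0_sqr t); lra).
rewrite cos_2a, sin_2a, cos_atan, sin_atan. fold s.
assert (HB : 0 < (r + x) * (r + x) + y * y) by nra.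
apply injective_projections; simpl.
- replace (r * (1 / s * (1 / s) - t / s * (t / s))) with (r * (1 - t * t) / (s * s)) by (field; auto).
  rewrite Hs. unfold Rsqr, t.
  transitivity (r * ((r + x) * (r + x) - y * y) / ((r + x) * (r + x) + y * y)). field; lra.
  apply (Rmult_eq_reg_r ((r + x) * (r + x) + y * y)); [| lra].
  unfold Rdiv. rewrite Rmult_assoc, Rinv_l by lra. rewrite Rmult_1_r.
  replace (y * y) with (r * r - x * x) by lra. ring.
- replace (r * (2 * (t / s) * (1 / s))) with (r * 2 * t / (s * s)) by (field; auto).
  rewrite Hs. unfold Rsqr, t.
  transitivity (r * 2 * y * (r + x) / ((r + x) * (r + x) + y * y)). field; lra.
  apply (Rmult_eq_reg_r ((r + x) * (r + x) + y * y)); [| lra].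
  unfold Rdiv. rewrite Rmult_assoc, Rinv_l by lra. rewrite Rmult_1_r.
  replace (y * y) with (r * r - x * x) by lra. ring.
Qed.


Ltac CReq := match goal with |- ?a = ?b => change (@eq C a b) end.

Lemma RtoC2 : RtoC 2 = (1 + 1)%C.
Proof. apply injective_projections; simpl; ring. Qed.
Lemma RtoC3 : RtoC 3 = (1 + 1 + 1)%C.
Proof. apply injective_projections; simpl; ring. Qed.

Lemma poch1 k : poch 1%C k = RtoC (INR (Factorial.fact k)).
Proof.
induction k. reflexivity.
change (poch 1%C (S k)) with (poch 1%C k * (1 + RtoC (INR k)))%C.
rewrite IHk, fact_simpl, mult_INR, S_INR, RtoC_mult, RtoC_plus. ring.
Qed.

Lemma fact_SS k : INR (Factorial.fact (S (S k))) = (INR k + 1 + 1) * ((INR k + 1) * INR (Factorial.fact k)).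
Proof. rewrite !fact_simpl, !mult_INR, !S_INR. ring. Qed.

Lemma poch3 k : (poch (RtoC 3) k * (1 + 1))%C = RtoC (INR (Factorial.fact (S (S k)))).
Proof.
induction k.
- simpl. apply injective_projections; simpl; ring.
- change (poch (RtoC 3) (S k)) with (poch (RtoC 3) k * (RtoC 3 + RtoC (INR k)))%C.
  replace (poch (RtoC 3) k * (RtoC 3 + RtoC (INR k)) * (1 + 1))%C
    with (poch (RtoC 3) k * (1 + 1) * (RtoC 3 + RtoC (INR k)))%C by ring.
  rewrite IHk. rewrite (fact_simpl (S (S k))), mult_INR, <- RtoC_plus, <- RtoC_mult.
  f_equal. rewrite !S_INR. ring.
Qed.

Lemma poch_SS z m : poch z (S (S m)) = (z * ((z + 1) * poch (z + RtoC 2) m))%C.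
Proof.
rewrite poch_S_l, poch_S_l.
replace (z + 1 + 1)%C with (z + RtoC 2)%C by (apply injective_projections; simpl; ring).
reflexivity.
Qed.

Lemma Cmod_le_sum c : Cmod c <= Rabs (Re c) + Rabs (Im c).
Proof.
unfold Cmod. rewrite <- (sqrt_Rsqr (Rabs (Re c) + Rabs (Im c))).
2: { pose proof (Rabs_pos (Re c)); pose proof (Rabs_pos (Im c)); lra. }
apply sqrt_le_1_alt. unfold Rsqr.
assert (E1 : Rabs (Re c) * Rabs (Re c) = fst c ^ 2).
{ rewrite <- Rabs_mult. rewrite Rabs_right. unfold Re; ring. apply Rle_ge. unfold Re. nra. }
assert (E2 : Rabs (Im c) * Rabs (Im c) = snd c ^ 2).
{ rewrite <- Rabs_mult. rewrite Rabs_right. unfold Im; ring. apply Rle_ge. unfold Im. nra. }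
pose proof (Rabs_pos (Re c)); pose proof (Rabs_pos (Im c)). nra.
Qed.

Lemma series_terms_0 (a : nat -> C) l : is_series a l -> is_lim_seq (fun n => Cmod (a n)) 0.
Proof.
intros H.
assert (HR : is_lim_seq (fun n => Re (a n)) 0).
{ apply ex_series_lim_0. exists (Re l). apply is_series_Re; auto. }
assert (HI : is_lim_seq (fun n => Im (a n)) 0).
{ apply ex_series_lim_0. exists (Im l). apply is_series_Im; auto. }
apply is_lim_seq_abs_0 in HR. apply is_lim_seq_abs_0 in HI.
apply (is_lim_seq_le_le (fun _ => 0) _ (fun n => Rabs (Re (a n)) + Rabs (Im (a n)))).
- intros n. split. apply Cmod_ge_0. apply Cmod_le_sum.
- apply is_lim_seq_const.
- replace (Finite 0) with (Rbar_plus 0 0) by (simpl; f_equal; ring).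
  apply is_lim_seq_plus'; auto.
Qed.

Lemma lim0_C (f : nat -> C) : is_lim_seq (fun n => Cmod (f n)) 0 -> filterlim f eventually (locally (RtoC 0)).
Proof.
intros H. apply lim_C.
- assert (L : is_lim_seq (fun n => Re (f n)) 0).
  { apply (is_lim_seq_le_le (fun n => - Cmod (f n)) _ (fun n => Cmod (f n))).
    - intros n. pose proof (re_le_Cmod (f n)). split.
      + pose proof (Rabs_le_between (Re (f n)) (Cmod (f n))). tauto.
      + pose proof (Rle_abs (Re (f n))). lra.
    - replace (Finite 0) with (Rbar_opp 0) by (simpl; f_equal; ring). apply (proj1 (is_lim_seq_opp _ _)). auto.
    - auto. }
  exact L.
- assert (L : is_lim_seq (fun n => Im (f n)) 0).
  { apply (is_lim_seq_le_le (fun n => - Cmod (f n)) _ (fun n => Cmod (f n))).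
    - intros n. pose proof (im_le_Cmod (f n)). split.
      + pose proof (Rabs_le_between (Im (f n)) (Cmod (f n))). tauto.
      + pose proof (Rle_abs (Im (f n))). lra.
    - replace (Finite 0) with (Rbar_opp 0) by (simpl; f_equal; ring). apply (proj1 (is_lim_seq_opp _ _)). auto.
    - auto. }
  exact L.
Qed.

Lemma tele (w : nat -> C) : filterlim w eventually (locally (RtoC 0)) ->
  is_series (fun k => w k - w (S k))%C (w O).
Proof.
intros H. unfold is_series.
apply (filterlim_ext (fun n => w O - w (S n))%C).
{ intros n. rewrite csum_sum_n. induction n; simpl. reflexivity. rewrite <- IHn. apply injective_projections; simpl; ring. }
apply lim_C.
- pose proof (lim_Re _ _ H) as HR.
  assert (L : is_lim_seq (fun n => Re (w O) - Re (w (S n))) (Re (w O) - 0)).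
  { apply is_lim_seq_minus'. apply is_lim_seq_const.
    apply (is_lim_seq_incr_1 (fun n => Re (w n))). exact HR. }
  rewrite Rminus_0_r in L. eapply filterlim_ext; [|exact L]. intros n. simpl. unfold Re, Im; Req; ring.
- pose proof (lim_Im _ _ H) as HR.
  assert (L : is_lim_seq (fun n => Im (w O) - Im (w (S n))) (Im (w O) - 0)).
  { apply is_lim_seq_minus'. apply is_lim_seq_const.
    apply (is_lim_seq_incr_1 (fun n => Im (w n))). exact HR. }
  rewrite Rminus_0_r in L. eapply filterlim_ext; [|exact L]. intros n. simpl. unfold Re, Im; Req; ring.
Qed.


Lemma INR_RtoC_nz k : (RtoC (INR k) + 1)%C <> 0%C.
Proof. rewrite <- RtoC_plus. apply RtoC_neq0. pose proof (pos_INR k). lra. Qed.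
Lemma INR_RtoC_nz2 k : (RtoC (INR k) + 1 + 1)%C <> 0%C.
Proof. rewrite <- RtoC_plus, <- RtoC_plus. apply RtoC_neq0. pose proof (pos_INR k). lra. Qed.

Lemma term_id z k :
  (forall k, (z + RtoC (INR k))%C <> 0%C) ->
  F22_term 1%C 1%C (RtoC 3) (z + RtoC 2)%C z k =
  ((1 + 1) * (Cpown z k / poch (z + RtoC 2) k) / (RtoC (INR k) + 1)
   - (1 + 1) * (Cpown z (S k) / poch (z + RtoC 2) (S k)) / (RtoC (INR (S k)) + 1)
   - ((1 + 1) * (z + 1) / z) * (Cpown z (S (S k)) / poch z (S (S (S k)))))%C.
Proof.
intros H.
assert (Hz : z <> 0%C) by exact (nz0 z (H O)).
assert (Hz1 : (z + 1)%C <> 0%C) by exact (H 1%nat).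
assert (H2 : forall j, (z + RtoC 2 + RtoC (INR j))%C <> 0%C).
{ intros j. specialize (H (S (S j))). rewrite !S_INR in H.
  replace (z + RtoC 2 + RtoC (INR j))%C with (z + RtoC (INR j + 1 + 1))%C; auto.
  rewrite !RtoC_plus, RtoC2. ring. }
assert (HP : poch (z + RtoC 2) k <> 0%C) by (apply poch_nz; exact H2).
pose proof (H2 k) as Hk.
unfold F22_term. rewrite poch1, poch_SS.
change (poch (z + RtoC 2) (S k)) with (poch (z + RtoC 2) k * (z + RtoC 2 + RtoC (INR k)))%C.
change (Cpown z (S (S k))) with (z * (z * Cpown z k))%C.
change (Cpown z (S k)) with (z * Cpown z k)%C.
assert (E3 : poch (RtoC 3) k = (RtoC (INR (Factorial.fact (S (S k)))) / (1 + 1))%C).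
{ rewrite <- poch3. field. }
rewrite E3, fact_SS, S_INR, !RtoC_mult, !RtoC_plus.
rewrite RtoC2 in *.
pose proof (INR_RtoC_nz k). pose proof (INR_RtoC_nz2 k). pose proof (fact_neq0 k).
field. repeat split; auto. all: first [exact (H2 k) | rewrite RtoC2; exact Hk].
Qed.

Lemma F22_main z T :
  (forall k, (z + RtoC (INR k))%C <> 0%C) ->
  is_series (fun m => Cpown z m / poch z (S m))%C T ->
  is_series (F22_term 1%C 1%C (RtoC 3) (z + RtoC 2)%C z)
    (RtoC 2 * (z + 1) / (z * z) * (1 + z - z * T))%C.
Proof.
intros H HT.
assert (Hz : z <> 0%C) by exact (nz0 z (H O)).
assert (Hz1 : (z + 1)%C <> 0%C) by exact (H 1%nat).
set (t := fun m => (Cpown z m / poch z (S m))%C) in *.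
set (w := fun k => ((1 + 1) * (Cpown z k / poch (z + RtoC 2) k) / (RtoC (INR k) + 1))%C).
set (c := ((1 + 1) * (z + 1) / z)%C).
assert (Hw : filterlim w eventually (locally (RtoC 0))).
{ apply lim0_C.
  pose proof (series_terms_0 _ _ HT) as Ht.
  apply (is_lim_seq_le_le (fun _ => 0) _ (fun n => Cmod ((1 + 1) * (z + 1)) * Cmod (t (S n)))).
  - intros n. split. apply Cmod_ge_0.
    assert (E : w n = ((1 + 1) * (z + 1) * t (S n) / (RtoC (INR n) + 1))%C).
    { unfold w, t. rewrite poch_SS. change (Cpown z (S n)) with (z * Cpown z n)%C.
      assert (HP : poch (z + RtoC 2) n <> 0%C).
      { apply poch_nz. intros j. specialize (H (S (S j))). rewrite !S_INR in H.
        replace (z + RtoC 2 + RtoC (INR j))%C with (z + RtoC (INR j + 1 + 1))%C; auto.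
        rewrite !RtoC_plus, RtoC2. ring. }
      pose proof (INR_RtoC_nz n). field. repeat split; auto. }
    rewrite E. rewrite Cmod_div by apply INR_RtoC_nz. rewrite Cmod_mult.
    rewrite <- (RtoC_plus (INR n) 1), Cmod_R, Rabs_right by (pose proof (pos_INR n); lra).
    pose proof (pos_INR n). pose proof (Cmod_ge_0 ((1 + 1) * (z + 1))). pose proof (Cmod_ge_0 (t (S n))).
    unfold Rdiv. rewrite <- (Rmult_1_r (Cmod ((1 + 1) * (z + 1)) * Cmod (t (S n)))) at 2.
    apply Rmult_le_compat_l. nra.
    rewrite <- Rinv_1. apply Rinv_le_contravar; lra.
  - apply is_lim_seq_const.
  - replace (Finite 0) with (Rbar_mult (Cmod ((1 + 1) * (z + 1))) 0) by (simpl; f_equal; ring).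
    apply is_lim_seq_scal_l. apply (is_lim_seq_incr_1 (fun n => Cmod (t n))). exact Ht. }
pose proof (tele w Hw) as HW.
assert (HT2 : is_series (fun k => t (S (S k))) (T - (t O + t 1%nat))%C).
{ assert (E : T = plus (T - (t O + t 1%nat))%C (sum_n t 1)).
  { rewrite csum_sum_n. simpl. apply injective_projections; simpl; ring. }
  rewrite E in HT. apply (is_series_incr_n t 2) in HT; [|lia]. exact HT. }
apply (@is_series_scal_l C_AbsRing C_NormedModule c) in HT2.
pose proof (is_series_minus _ _ _ _ HW HT2) as M.
eapply is_series_ext.
{ intros k. symmetry. apply term_id. exact H. }
replace (RtoC 2 * (z + 1) / (z * z) * (1 + z - z * T))%C
  with (plus (w O) (opp (scal c (T - (t O + t 1%nat)))))%C.
{ eapply is_series_ext; [|exact M]. intros k. reflexivity. }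
change (w O - c * (T - (t O + t 1%nat)) = RtoC 2 * (z + 1) / (z * z) * (1 + z - z * T))%C.
unfold w, t, c. simpl. rewrite RtoC2. field. repeat split; auto.
Qed.


Lemma part1 : forall z : C, in_slit_plane z ->
     exists g : C, is_lower_gamma z z g /\
       is_series (F22_term 1%C 1%C (RtoC 3) (z + RtoC 2)%C z)
         (RtoC 2 * (z + 1) / (z * z)
            * (1 + z - g / (Cpowc z (z - 1) * Cexp (- z))))%C.
Proof.
intros z Hz. destruct (lg_series z Hz) as [Sg HS]. change C in Sg.
exists (Cmult (Cpowc z z) Sg). split.
- exists Sg. split; auto.
- pose proof (F22_main z (Cmult Sg (Cexp z)) (slit_nz z Hz) (T_series z Sg Hz HS)) as M.
  replace ((Cpowc z z * Sg) / (Cpowc z (z - 1) * Cexp (- z)))%C with (z * (Sg * Cexp z))%C.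
  exact M.
  assert (E1 : Cpowc z z = (Cpowc z (z - 1) * z)%C).
  { unfold Cpowc. replace (z * CLog z)%C with ((z - 1) * CLog z + CLog z)%C by ring.
    rewrite Cexp_add, Cexp_log by exact Hz. reflexivity. }
  assert (E2 : Cexp z = (/ Cexp (- z))%C).
  { pose proof (Cexp_opp z) as O. transitivity ((Cexp (- z) * Cexp z) / Cexp (- z))%C. field. apply Cexp_nz. rewrite O. unfold Cdiv. ring. }
  rewrite E1, E2. unfold Cpowc. pose proof (Cexp_nz ((z - 1) * CLog z)). pose proof (Cexp_nz (- z)).
  field. auto.
Qed.

Lemma rpoch_pos a k : 0 < a -> 0 < rpoch a k.
Proof. intros Ha. induction k; simpl. lra. pose proof (pos_INR k). apply Rmult_lt_0_compat; lra. Qed.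

Lemma poch_R a k : poch (RtoC a) k = RtoC (rpoch a k).
Proof. induction k; simpl. reflexivity. rewrite IHk, RtoC_mult, RtoC_plus. reflexivity. Qed.

Lemma rpoch_fact p m : rpoch (INR (S p)) (S m) * INR (Factorial.fact p) = INR (Factorial.fact (S p + m)).
Proof.
induction m.
- change (rpoch (INR (S p)) 1) with (1 * (INR (S p) + INR 0)). rewrite Nat.add_0_r, fact_simpl, mult_INR. change (INR 0) with 0. ring.
- change (rpoch (INR (S p)) (S (S m))) with (rpoch (INR (S p)) (S m) * (INR (S p) + INR (S m))).
  replace (rpoch (INR (S p)) (S m) * (INR (S p) + INR (S m)) * INR (Factorial.fact p))
    with (rpoch (INR (S p)) (S m) * INR (Factorial.fact p) * (INR (S p) + INR (S m))) by ring.
  rewrite IHm. rewrite Nat.add_succ_r, (fact_simpl (S p + m)), mult_INR.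
  rewrite <- plus_INR. rewrite Nat.add_succ_r. ring.
Qed.

Lemma Treal p :
  let x := INR (S p) in
  is_series (fun m => x ^ m / rpoch x (S m))
    (INR (Factorial.fact p) / x ^ (S p) *
       (exp x - sum_f_R0 (fun k => x ^ k / INR (Factorial.fact k)) p)).
Proof.
intros x.
assert (Hx : 0 < x) by (unfold x; rewrite S_INR; pose proof (pos_INR p); lra).
pose proof (is_exp_Reals x) as H. unfold is_pseries in H.
assert (H' : is_series (fun k => x ^ k / INR (Factorial.fact k)) (exp x)).
{ eapply is_series_ext; [|exact H]. intros n. rewrite pow_n_pow. reflexivity. }
assert (E : exp x = plus (exp x - sum_f_R0 (fun k => x ^ k / INR (Factorial.fact k)) p)
                         (sum_n (fun k => x ^ k / INR (Factorial.fact k)) (pred (S p)))).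
{ rewrite sum_n_Reals. simpl pred. change (plus ?a ?b) with (a + b). ring. }
rewrite E in H'. pose proof (is_series_incr_n _ (S p) _ (Nat.lt_0_succ p) H') as H2. clear H'. rename H2 into H'.
apply (is_series_scal_r (INR (Factorial.fact p) / x ^ (S p))) in H'.
rewrite Rmult_comm in H'.
eapply is_series_ext; [|exact H']. intros m. cbv beta.
pose proof (rpoch_fact p m) as F. fold x in F.
pose proof (rpoch_pos x (S m) Hx).
rewrite <- F. rewrite pow_add. Req.
field. split. lra. split. apply pow_nonzero; lra. apply INR_fact_neq_0.
Qed.

Lemma RtoC_div' x y : y <> 0 -> (RtoC x / RtoC y)%C = RtoC (x / y).
Proof. intros H. symmetry. apply RtoC_div. exact H. Qed.

Lemma part2 : forall n : nat, (1 <= n)%nat ->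
     is_series (F22_term_R 1 1 3 (INR n + 2) (INR n))
       (2 * (INR n + 1) / (INR n ^ 2)
          * (1 + INR n - INR (Factorial.fact (n - 1)) / (INR n ^ (n - 1))
               * (exp (INR n) - sum_f_R0 (fun k => INR n ^ k / INR (Factorial.fact k)) (n - 1)))).
Proof.
intros n Hn. destruct n as [|p]; [lia|].
replace (S p - 1)%nat with p by lia.
pose proof (Treal p) as HTr. cbv zeta in HTr.
set (x := INR (S p)) in *.
assert (Hx : 0 < x) by (unfold x; rewrite S_INR; pose proof (pos_INR p); lra).
set (Tr := INR (Factorial.fact p) / x ^ (S p) *
       (exp x - sum_f_R0 (fun k => x ^ k / INR (Factorial.fact k)) p)) in *.
apply is_series_RtoC in HTr.
assert (HT : is_series (fun m => Cpown (RtoC x) m / poch (RtoC x) (S m))%C (RtoC Tr)).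
{ eapply is_series_ext; [|exact HTr]. intros m. cbv beta.
  rewrite Cpown_RtoC, poch_R. symmetry. apply RtoC_div'.
  apply Rgt_not_eq, rpoch_pos. exact Hx. }
assert (Hnz : forall k, (RtoC x + RtoC (INR k))%C <> 0%C).
{ intros k. rewrite <- RtoC_plus. apply RtoC_neq0. pose proof (pos_INR k). lra. }
pose proof (F22_main (RtoC x) (RtoC Tr) Hnz HT) as M.
apply is_series_Re in M.
assert (Hx2 : 0 < x + 2) by lra.
eapply is_series_ext; [|
  replace (2 * (x + 1) / x ^ 2 * (1 + x - INR (Factorial.fact p) / x ^ p *
        (exp x - sum_f_R0 (fun k => x ^ k / INR (Factorial.fact k)) p)))
  with (Re (RtoC 2 * (RtoC x + 1) / (RtoC x * RtoC x) * (1 + RtoC x - RtoC x * RtoC Tr))%C);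
  [exact M|]].
- intros k. cbv beta. unfold F22_term, F22_term_R.
  rewrite <- RtoC_plus, !poch_R, Cpown_RtoC.
  repeat first [ rewrite <- RtoC_mult
               | rewrite RtoC_div' by (first [apply INR_fact_neq_0 | apply Rgt_not_eq, Rmult_lt_0_compat; apply rpoch_pos; lra]) ].
  reflexivity.
- rewrite <- (RtoC_plus x 1), <- (RtoC_plus 1 x), <- (RtoC_mult x Tr), <- RtoC_minus.
  rewrite <- !RtoC_mult.
  rewrite RtoC_div' by (apply Rgt_not_eq, Rmult_lt_0_compat; lra).
  rewrite <- RtoC_mult. simpl Re.
  unfold Tr. change (x ^ S p) with (x * x ^ p).
  assert (x ^ p <> 0) by (apply pow_nonzero; lra).
  field. split; lra.
Qed.

Theorem lemma2p3 :
  (forall z : C, in_slit_plane z ->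
     exists g : C, is_lower_gamma z z g /\
       is_series (F22_term 1%C 1%C (RtoC 3) (z + RtoC 2)%C z)
         (RtoC 2 * (z + 1) / (z * z)
            * (1 + z - g / (Cpowc z (z - 1) * Cexp (- z))))%C)
  /\
  (forall n : nat, (1 <= n)%nat ->
     is_series (F22_term_R 1 1 3 (INR n + 2) (INR n))
       (2 * (INR n + 1) / (INR n ^ 2)
          * (1 + INR n - INR (Factorial.fact (n - 1)) / (INR n ^ (n - 1))
               * (exp (INR n) - sum_f_R0 (fun k => INR n ^ k / INR (Factorial.fact k)) (n - 1))))).
Proof. split. exact part1. exact part2. Qed.
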